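(* Let $\Bbbk$ be a field with $\mathrm{char}(\Bbbk)\neq2$, $n\ge2$, $\mathbb{H}_{2^n}$ the Nichols Hopf algebra and $A$ a unital associative $\Bbbk$-algebra. Every partial action $\cdot$ of $\mathbb{H}_{2^n}$ on $A$ such that either $g\cdot1_A=1_A$, or $g\cdot 1_A=0$ and $x_i\cdot 1_A\in Z(A)$ for all $i\in\{1,\dots,n-1\}$, is symmetric, i.e. satisfies $h\cdot(k\cdot a)=(h_1k\cdot a)(h_2\cdot1_A)$ for all $h,k\in\mathbb{H}_{2^n}$, $a\in A$.
   Context: $\mathbb{H}_{2^n}$ is the Hopf algebra generated by $g,x_1,\dots,x_{n-1}$ with relations $g^2=1$, $x_i^2=0$, $x_ig=-gx_i$, $x_ix_j=-x_jx_i$; it has basis $\{g^{j_0}x_1^{j_1}\cdots x_{n-1}^{j_{n-1}}:j_i\in\{0,1\}\}$, with $\Delta(g)=g\otimes g$, $\varepsilon(g)=1$, $\Delta(x_i)=x_i\otimes1+g\otimes x_i$, $\varepsilon(x_i)=0$, $S(g)=g$, $S(x_i)=-gx_i$. $Z(A)$ is the center of $A$. For a bialgebra $H$ with $\Delta(h)=h_1\otimes h_2$, a partial action of $H$ on $A$ is a linear map $\cdot:H\otimes A\to A$ with $1_H\cdot a=a$, $h\cdot(ab)=(h_1\cdot a)(h_2\cdot b)$ and $h\cdot(k\cdot a)=(h_1\cdot1_A)(h_2k\cdot a)$ for all $h,k\in H$, $a,b\in A$. *)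

(* Defs.v *)
From HB Require Import structures.
From mathcomp Require Import all_boot all_order all_algebra.
Set Implicit Arguments. Unset Strict Implicit. Unset Printing Implicit Defensive.
Import Order.TTheory GRing.Theory Num.Theory.
Local Open Scope ring_scope.

(* The Nichols Hopf algebra H_{2^n}, generated by g, x_1, ..., x_{n-1}.
   The generator x_i (1 <= i <= n-1) is indexed by the ordinal i-1 : 'I_(n.-1)
   (the order of indices is preserved).  The basis element
   g^{j_0} x_{i_1} ... x_{i_k} (i_1 < ... < i_k) is indexed by
   (j_0, {i_1,...,i_k}) : bool * {set 'I_(n.-1)}.  An element of H_{2^n}
   is its coordinate function on this basis. *)

Notation Hidx n := (bool * {set 'I_n.-1})%type.
Notation Hn K n := {ffun Hidx n -> K^o}.

Section Nichols.
Variables (K : fieldType) (n : nat).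

Definition sgn (k : nat) : K := (-1) ^+ k.

Definition hb (b : Hidx n) : Hn K n := [ffun c => (c == b)%:R].

Definition cross (S T : {set 'I_n.-1}) : nat :=
  #|[set p : 'I_n.-1 * 'I_n.-1 | [&& p.1 \in S, p.2 \in T & (p.2 < p.1)%N]]|.

(* (g^a x_S)(g^b x_T) = (-1)^{b|S|} g^{a+b} x_S x_T, and
   x_S x_T = 0 if S, T meet, (-1)^{cross S T} x_{S u T} otherwise *)
Definition hbmul (u v : Hidx n) : Hn K n :=
  if [disjoint u.2 & v.2] then
    sgn (v.1 * #|u.2| + cross u.2 v.2) *: hb (u.1 (+) v.1, u.2 :|: v.2)
  else 0.

Definition hmul (h k : Hn K n) : Hn K n :=
  \sum_(u : Hidx n) \sum_(v : Hidx n) (h u * k v) *: hbmul u v.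

Definition H1 : Hn K n := hb (false, set0).
Definition Hg : Hn K n := hb (true, set0).
Definition Hx (i : 'I_n.-1) : Hn K n := hb (false, [set i]).

(* Comultiplication: Delta(x_i) = x_i (x) 1 + g (x) x_i, Delta(g) = g (x) g,
   multiplicatively extended:
   Delta(g^a x_S) = sum_{T subset S} (-1)^{cross T (S\T)} g^{a+|T|} x_{S\T} (x) g^a x_T.
   Sweedler sum: hsum h F = sum F(h_1, h_2), for F bilinear. *)
Definition hsum (V : lmodType K) (h : Hn K n) (F : Hn K n -> Hn K n -> V) : V :=
  \sum_(u : Hidx n) \sum_(T in powerset u.2)
     (h u * sgn (cross T (u.2 :\: T))) *:
       F (hb (u.1 (+) odd #|T|, u.2 :\: T)) (hb (u.1, T)).

Section Action.
Variable (A : algType K).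

(* a linear map H (x) A -> A, given as a bilinear map *)
Definition bilinear_act (act : Hn K n -> A -> A) :=
  (forall (c : K) h1 h2 a, act (c *: h1 + h2) a = c *: act h1 a + act h2 a) /\
  (forall (c : K) h a b, act h (c *: a + b) = c *: act h a + act h b).

Definition partial_action (act : Hn K n -> A -> A) :=
  [/\ bilinear_act act,
      (forall a, act H1 a = a),
      (forall h a b, act h (a * b) = hsum h (fun h1 h2 => act h1 a * act h2 b)) &
      (forall h k a, act h (act k a) =
         hsum h (fun h1 h2 => act h1 1 * act (hmul h2 k) a))].

Definition symmetric_partial_action (act : Hn K n -> A -> A) :=
  forall h k a, act h (act k a) =
    hsum h (fun h1 h2 => act (hmul h1 k) a * act h2 1).

Definition central (z : A) := forall b : A, z * b = b * z.

End Action.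
End Nichols.

(* Main.v *)
Require Import Defs.
From HB Require Import structures.
From mathcomp Require Import all_boot all_order all_algebra zify.
Set Implicit Arguments. Unset Strict Implicit. Unset Printing Implicit Defensive.
Import Order.TTheory GRing.Theory Num.Theory.
Local Open Scope ring_scope.


Section Gen.
Variables (K : fieldType) (n : nat).
Local Notation I := (Hidx n).
Local Notation H := (Hn K n).

Lemma hbE (b c : I) : hb K b c = (c == b)%:R. Proof. by rewrite ffunE. Qed.

Lemma scaleffE (c : K) (h : H) x : (c *: h) x = c * h x.
Proof. by rewrite ffunE. Qed.

Lemma hdecomp (h : H) : h = \sum_u h u *: hb K u.
Proof.
apply/ffunP => x; rewrite sum_ffunE (bigD1 x) //= big1 ?addr0.
  by rewrite scaleffE hbE eqxx mulr1.
by move=> u /negbTE ux; rewrite scaleffE hbE eq_sym ux mulr0.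
Qed.

Definition hsumb (V : lmodType K) (u : I) (F : H -> H -> V) : V :=
  \sum_(T in powerset u.2)
     sgn K (cross T (u.2 :\: T)) *: F (hb K (u.1 (+) odd #|T|, u.2 :\: T)) (hb K (u.1, T)).

Lemma hsumE (V : lmodType K) (h : H) (F : H -> H -> V) :
  hsum h F = \sum_u h u *: hsumb u F.
Proof.
rewrite /hsum; apply: eq_bigr => u _; rewrite scaler_sumr; apply: eq_bigr => T _.
by rewrite scalerA.
Qed.

Lemma hsum_hb (V : lmodType K) (u : I) (F : H -> H -> V) :
  hsum (hb K u) F = hsumb u F.
Proof.
rewrite hsumE (bigD1 u) //= big1 ?addr0; first by rewrite hbE eqxx scale1r.
by move=> v /negbTE vu; rewrite hbE vu scale0r.
Qed.

Lemma hmul_hbl (u : I) (k : H) : hmul (hb K u) k = \sum_v k v *: hbmul K u v.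
Proof.
rewrite /hmul (bigD1 u) //= [X in _ + X]big1 ?addr0.
  by apply: eq_bigr => v _; rewrite hbE eqxx mul1r.
by move=> w /negbTE wu; rewrite big1 // => v _; rewrite hbE wu mul0r scale0r.
Qed.

Lemma hmul_hb (u v : I) : hmul (hb K u) (hb K v) = hbmul K u v.
Proof.
rewrite hmul_hbl (bigD1 v) //= big1 ?addr0; first by rewrite hbE eqxx scale1r.
by move=> w /negbTE wu; rewrite hbE wu scale0r.
Qed.

Lemma sgnD a b : sgn K (a + b) = sgn K a * sgn K b.
Proof. by rewrite /sgn exprD. Qed.
Lemma sgnK a : sgn K a * sgn K a = 1.
Proof. by rewrite /sgn -expr2 sqrr_sign. Qed.
Lemma sgn0 : sgn K 0 = 1. Proof. by []. Qed.
Lemma sgn1 : sgn K 1 = -1. Proof. by rewrite /sgn expr1. Qed.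

Lemma cross0s (T : {set 'I_n.-1}) : cross set0 T = 0%N.
Proof. by apply/eqP; rewrite cards_eq0; apply/eqP/setP => p; rewrite !inE. Qed.
Lemma crosss0 (T : {set 'I_n.-1}) : cross T set0 = 0%N.
Proof. by apply/eqP; rewrite cards_eq0; apply/eqP/setP => p; rewrite !inE andbF. Qed.
Lemma cross11 (i j : 'I_n.-1) : cross [set i] [set j] = (j < i)%N.
Proof.
rewrite /cross; case: ltnP => ji.
  rewrite (_ : [set _ | _] = [set (i, j)]) ?cards1 //.
  apply/setP => [[a b]]; rewrite !inE /= xpair_eqE.
  by case: (a =P i) => [->|]; case: (b =P j) => [->|] //=; rewrite ji.
apply/eqP; rewrite cards_eq0; apply/eqP/setP => [[a b]]; rewrite !inE /=.
by case: (a =P i) => [->|]; case: (b =P j) => [->|] //=; rewrite ltnNge ji.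
Qed.

Lemma hsumb0 (V : lmodType K) c (F : H -> H -> V) :
  hsumb (c, set0) F = F (hb K (c, set0)) (hb K (c, set0)).
Proof.
rewrite /hsumb (bigD1 set0) /=; last by rewrite powersetE sub0set.
rewrite big1 ?addr0.
  by rewrite cross0s sgn0 scale1r cards0 addbF setD0.
move=> T; rewrite powersetE subset0 => /andP[/eqP -> ]; by rewrite eqxx.
Qed.

Lemma hsumb1 (V : lmodType K) c i (F : H -> H -> V) :
  hsumb (c, [set i]) F = F (hb K (c, [set i])) (hb K (c, set0))
                       + F (hb K (~~ c, set0)) (hb K (c, [set i])).
Proof.
rewrite /hsumb (bigD1 set0) /=; last by rewrite powersetE sub0set.
rewrite (bigD1 [set i]) /=; last first.
  by rewrite powersetE subxx /=; apply/set0Pn; exists i; rewrite inE.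
rewrite big1 ?addr0.
  by rewrite setD0 setDv cross0s crosss0 sgn0 !scale1r cards0 cards1 addbF addbT.
move=> T /andP[/andP[]]; rewrite powersetE subset1 => /orP[] /eqP ->;
  by rewrite eqxx.
Qed.

End Gen.


Section Act.
Variables (K : fieldType) (n : nat) (A : algType K) (act : Hn K n -> A -> A).
Hypothesis PA : partial_action act.
Local Notation I := (Hidx n).
Local Notation H := (Hn K n).

Lemma actDl h1 h2 a : act (h1 + h2) a = act h1 a + act h2 a.
Proof. by have [[L _] _ _ _] := PA; have := L 1 h1 h2 a; rewrite !scale1r. Qed.
Lemma act0l a : act 0 a = 0.
Proof.
have h := actDl 0 0 a; rewrite addr0 in h.
by apply: (addrI (act 0 a)); rewrite -h addr0.
Qed.
Lemma actZl c h a : act (c *: h) a = c *: act h a.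
Proof. by have [[L _] _ _ _] := PA; rewrite -[c *: h]addr0 L act0l addr0. Qed.
Lemma actNl h a : act (- h) a = - act h a.
Proof. by rewrite -scaleN1r actZl scaleN1r. Qed.
Lemma actDr h a b : act h (a + b) = act h a + act h b.
Proof. by have [[_ L] _ _ _] := PA; have := L 1 h a b; rewrite !scale1r. Qed.
Lemma act0r h : act h 0 = 0.
Proof.
have e := actDr h 0 0; rewrite addr0 in e.
by apply: (addrI (act h 0)); rewrite -e addr0.
Qed.
Lemma actZr c h a : act h (c *: a) = c *: act h a.
Proof. by have [[_ L] _ _ _] := PA; rewrite -[c *: a]addr0 L act0r addr0. Qed.

Lemma act_suml (J : finType) (c : J -> K) (m : J -> H) a :
  act (\sum_j c j *: m j) a = \sum_j c j *: act (m j) a.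
Proof.
elim/big_rec2: _ => [|j x y _ <-]; first by rewrite act0l.
by rewrite actDl actZl.
Qed.

Lemma act_dec h a : act h a = \sum_u h u *: act (hb K u) a.
Proof. by rewrite {1}(hdecomp h) act_suml. Qed.

Lemma act1 a : act (hb K (false, set0)) a = a.
Proof. by have [_ P1 _ _] := PA; apply: P1. Qed.

Lemma P2b u a b : act (hb K u) (a * b) = hsumb u (fun h1 h2 => act h1 a * act h2 b).
Proof. by have [_ _ P2 _] := PA; rewrite P2 hsum_hb. Qed.

Lemma P3b u k a : act (hb K u) (act k a) =
  hsumb u (fun h1 h2 => act h1 1 * act (hmul h2 k) a).
Proof. by have [_ _ _ P3] := PA; rewrite P3 hsum_hb. Qed.

Lemma reduce_basis :
  (forall u k a, act (hb K u) (act k a) =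
     hsumb u (fun h1 h2 => act (hmul h1 k) a * act h2 1)) ->
  symmetric_partial_action act.
Proof.
move=> Hb h k a; rewrite hsumE act_dec; apply: eq_bigr => u _.
by rewrite Hb.
Qed.

Lemma disj0 (R : {set 'I_n.-1}) : [disjoint set0 & R].
Proof. by rewrite -setI_eq0 set0I. Qed.

Lemma hbmul_0l (v : I) : hbmul K (false, set0) v = hb K v.
Proof.
case: v => d R; rewrite /hbmul /= disj0 cards0 muln0 cross0s sgn0 scale1r.
by rewrite set0U.
Qed.

Lemma hbmul_gl d (R : {set 'I_n.-1}) : hbmul K (true, set0) (d, R) = hb K (~~ d, R).
Proof.
by rewrite /hbmul /= disj0 cards0 muln0 cross0s sgn0 scale1r set0U.
Qed.

Lemma hbmul_1l c (j : 'I_n.-1) d (R : {set 'I_n.-1}) : hbmul K (c, [set j]) (d, R) =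
  if j \in R then 0 else sgn K (d + cross [set j] R) *: hb K (c (+) d, j |: R).
Proof.
by rewrite /hbmul /= disjoints1 cards1 muln1; case: (j \in R).
Qed.

Lemma hmul1l (k : H) : hmul (hb K (false, set0)) k = k.
Proof.
by rewrite hmul_hbl [RHS]hdecomp; apply: eq_bigr => v _; rewrite hbmul_0l.
Qed.

End Act.


Section E1.
Variables (K : fieldType) (n : nat) (A : algType K) (act : Hn K n -> A -> A).
Hypothesis PA : partial_action act.
Hypothesis e1 : act (hb K (true, set0)) 1 = 1.
Local Notation I := (Hidx n).
Local Notation H := (Hn K n).

Lemma f0 (i : 'I_n.-1) : act (hb K (false, [set i])) 1 = 0.
Proof.
have := P2b PA (false, [set i]) 1 1; rewrite hsumb1 /= mulr1 (act1 PA) e1 mulr1 mul1r.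
by move=> h; apply: (addrI (act (hb K (false, [set i])) 1)); rewrite addr0 -h.
Qed.

Lemma Xmul (i : 'I_n.-1) (m : H) z :
  act (hmul (hb K (false, [set i])) m) z = act (hb K (false, [set i])) (act m z).
Proof. by rewrite (P3b PA) hsumb1 /= f0 mul0r add0r e1 mul1r. Qed.

Lemma Gmul (m : H) z :
  act (hmul (hb K (true, set0)) m) z = act (hb K (true, set0)) (act m z).
Proof. by rewrite (P3b PA) hsumb0 e1 mul1r. Qed.

Lemma lam1f (U : {set 'I_n.-1}) :
  act (hb K (false, U)) 1 = if U == set0 then 1 else 0.
Proof.
move: {2}#|U| (leqnn #|U|) => N; elim: N U => [|N IH] U hU.
  move: hU; rewrite leqn0 cards_eq0 => /eqP ->; by rewrite eqxx (act1 PA).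
case: (boolP (U == set0)) => [/eqP ->|U0]; first by rewrite (act1 PA).
have [i iU] := set0Pn U U0.
set R := U :\ i.
have hR : (#|R| <= N)%N by move: hU; rewrite (cardsD1 i U) iU.
have iR : i \notin R by rewrite /R setD11.
have eU : hb K (false, U) =
    sgn K (cross [set i] R) *: hmul (hb K (false, [set i])) (hb K (false, R)).
  rewrite hmul_hb hbmul_1l (negbTE iR) scalerA add0n sgnK scale1r addbF.
  by rewrite /R setD1K.
rewrite eU (actZl PA) Xmul (IH R hR).
by case: (R == set0); rewrite ?f0 ?(act0r PA) scaler0.
Qed.

Lemma lam1 (u : I) : act (hb K u) 1 = if u.2 == set0 then 1 else 0.
Proof.
case: u => [[|] U]; last exact: lam1f.
have -> : hb K (true, U) = hmul (hb K (true, set0)) (hb K (false, U)).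
  by rewrite hmul_hb hbmul_gl.
rewrite Gmul lam1f /=; case: ifP => _; [exact: e1 | exact: (act0r PA)].
Qed.

Lemma sym1 : symmetric_partial_action act.
Proof.
apply: (reduce_basis PA) => -[c S] k a; rewrite (P3b PA).
transitivity (act (hmul (hb K (c, S)) k) a).
  rewrite /hsumb (bigD1 S) /=; last by rewrite powersetE subxx.
  rewrite big1 ?addr0.
    by rewrite setDv crosss0 sgn0 scale1r lam1 /= eqxx mul1r.
  move=> T /andP[]; rewrite powersetE => TS TnS.
  rewrite lam1 /=.
  have -> : (S :\: T == set0) = false.
    by rewrite setD_eq0; apply: contraNF TnS => ST; rewrite eqEsubset TS ST.
  by rewrite mul0r scaler0.
rewrite /hsumb (bigD1 set0) /=; last by rewrite powersetE sub0set.
rewrite big1 ?addr0.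
  by rewrite cross0s sgn0 scale1r setD0 cards0 addbF lam1 /= eqxx mulr1.
by move=> T /andP[_ T0]; rewrite lam1 /= (negbTE T0) mulr0 scaler0.
Qed.

End E1.


Section E0.
Variables (K : fieldType) (n : nat) (A : algType K) (act : Hn K n -> A -> A).
Hypothesis PA : partial_action act.
Hypothesis e0 : act (hb K (true, set0)) 1 = 0.
Local Notation f i := (act (hb K (false, [set i])) 1).
Hypothesis cen : forall i : 'I_n.-1, central (f i).
Local Notation I := (Hidx n).
Local Notation H := (Hn K n).
Local Notation y i := (act (hb K (true, [set i])) 1).

Lemma actG z : act (hb K (true, set0)) z = 0.
Proof. by rewrite -{1}(act1 PA z) (P3b PA) hsumb0 e0 mul0r. Qed.

Lemma actGX (i : 'I_n.-1) z : act (hb K (true, [set i])) z = z * y i.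
Proof.
by have := P2b PA (true, [set i]) z 1; rewrite mulr1 hsumb1 /= e0 mulr0 add0r (act1 PA).
Qed.

Lemma E1 (i : 'I_n.-1) (k : H) z : act k z * y i =
  y i * act (hmul (hb K (true, set0)) k) z + act (hmul (hb K (true, [set i])) k) z.
Proof. by rewrite -actGX (P3b PA) hsumb1 /= (act1 PA) mul1r. Qed.

Lemma actX (i : 'I_n.-1) z : act (hb K (false, [set i])) z = y i * z.
Proof.
have := E1 i (hb K (true, set0)) z.
rewrite actG mul0r !hmul_hb hbmul_gl hbmul_1l in_set0 crosss0 addn0 sgn1 /=.
rewrite setU0 (act1 PA) (actZl PA) scaleN1r => h.
by apply/eqP; rewrite eq_sym -subr_eq0 -h.
Qed.

Lemma yf (i : 'I_n.-1) : y i = f i.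
Proof. by rewrite actX mulr1. Qed.

Lemma W c (i : 'I_n.-1) (R : {set 'I_n.-1}) z : i \notin R ->
  act (hb K (c, i |: R)) z = sgn K (cross [set i] R) *:
     (f i * (act (hb K (false, R)) z - act (hb K (true, R)) z)).
Proof.
move=> iR; have := E1 i (hb K (~~ c, R)) z.
rewrite !hmul_hb hbmul_gl hbmul_1l (negbTE iR) negbK (actZl PA) addTb negbK !yf => h.
have h2 : sgn K (~~ c + cross [set i] R) *: act (hb K (c, i |: R)) z =
          f i * (act (hb K (~~ c, R)) z - act (hb K (c, R)) z).
  rewrite mulrBr (cen i (act (hb K (~~ c, R)) z)) h.
  by rewrite [f i * _ + _]addrC addrK.
rewrite -[LHS]scale1r -(sgnK K (~~ c + cross [set i] R)) -scalerA h2.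
case: c {h h2} => /=; first by rewrite add0n.
by rewrite sgnD sgn1 mulN1r scaleNr -scalerN -mulrN opprB.
Qed.

Lemma psi1 c (i : 'I_n.-1) z : act (hb K (c, [set i])) z = f i * z.
Proof.
have := @W c i set0 z; rewrite in_set0 => /(_ isT).
by rewrite setU0 crosss0 sgn0 scale1r (act1 PA) actG subr0.
Qed.

Lemma psi_ne c (U : {set 'I_n.-1}) z : U != set0 ->
  act (hb K (c, U)) z = act (hb K (false, U)) z.
Proof.
case/set0Pn => i iU; rewrite -(setD1K iU).
by rewrite !W ?setD11.
Qed.

Lemma psi2 c (U : {set 'I_n.-1}) z : (1 < #|U|)%N -> act (hb K (c, U)) z = 0.
Proof.
move=> hU.
have U0 : U != set0 by rewrite -card_gt0; apply: ltn_trans hU.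
case/set0Pn: U0 => i iU.
have R0 : U :\ i != set0.
  by rewrite -card_gt0; move: hU; rewrite (cardsD1 i U) iU.
by rewrite -(setD1K iU) W ?setD11 // (psi_ne true _ R0) subrr mulr0 scaler0.
Qed.

Lemma Ucases (U : {set 'I_n.-1}) :
  U = set0 \/ (exists i, U = [set i]) \/ (1 < #|U|)%N.
Proof.
case: (ltngtP #|U| 1) => h.
- by left; apply/eqP; rewrite -cards_eq0; move: h; case: #|U|.
- by right; right.
- by right; left; apply/cards1P/eqP.
Qed.

Lemma actEb (u : I) z : act (hb K u) z = act (hb K u) 1 * z.
Proof.
case: u => c U; case: (Ucases U) => [->|[[i ->]|hU]].
- by case: c; rewrite ?actG ?mul0r // !(act1 PA) mul1r.
- have h1 := psi1 c i z; have h2 := psi1 c i 1; rewrite mulr1 in h2.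
  by rewrite h1 h2.
- by rewrite !psi2 // mul0r.
Qed.

Lemma actE (m : H) z : act m z = act m 1 * z.
Proof.
rewrite (act_dec PA m z) (act_dec PA m 1) mulr_suml; apply: eq_bigr => u _.
by rewrite -scalerAl actEb.
Qed.

Lemma cenb (u : I) : central (act (hb K u) 1).
Proof.
case: u => c U; case: (Ucases U) => [->|[[i ->]|hU]] b.
- by case: c; rewrite ?actG ?mul0r ?mulr0 // !(act1 PA) mul1r mulr1.
- by rewrite psi1 mulr1; apply: cen.
- by rewrite !psi2 // mul0r mulr0.
Qed.

Lemma cen_all (m : H) : central (act m 1).
Proof.
move=> b; rewrite (act_dec PA m 1) mulr_suml mulr_sumr; apply: eq_bigr => u _.
by rewrite -scalerAl -scalerAr cenb.
Qed.

Lemma M2 c (U : {set 'I_n.-1}) (k : H) : (1 < #|U|)%N ->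
  act (hmul (hb K (c, U)) k) 1 = 0.
Proof.
move=> hU; rewrite hmul_hbl (act_suml PA) big1 // => -[d R] _.
rewrite /hbmul /=; case: ifP => _; last by rewrite (act0l PA) scaler0.
rewrite (actZl PA) psi2 ?scaler0 //.
exact: leq_trans hU (subset_leq_card (subsetUl U R)).
Qed.

Lemma M1 c (j : 'I_n.-1) (k : H) : act (hmul (hb K (c, [set j])) k) 1 =
  f j * (act k 1 - act (hmul (hb K (true, set0)) k) 1).
Proof.
rewrite hmul_hbl (act_suml PA) [act k 1](act_dec PA) hmul_hbl (act_suml PA).
rewrite -sumrB mulr_sumr; apply: eq_bigr => -[d R] _.
rewrite -scalerBr -scalerAr; congr (_ *: _).
rewrite hbmul_gl hbmul_1l; case: (boolP (j \in R)) => jR.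
  have R0 : R != set0 by apply/set0Pn; exists j.
  by rewrite (act0l PA) (psi_ne d _ R0) (psi_ne (~~ d) _ R0) subrr mulr0.
rewrite (actZl PA); case: (R =P set0) => [->|/eqP R0].
  rewrite setU0 crosss0 addn0 psi1 mulr1.
  by case: d => /=; rewrite ?e0 ?(act1 PA) ?sgn1 ?sgn0 ?scale1r ?scaleN1r
     ?subr0 ?sub0r ?mulr1 ?mulrN1.
rewrite (@psi2 (c (+) d) (j |: R) 1) ?scaler0; last first.
  by rewrite cardsU1 jR add1n ltnS card_gt0.
by rewrite (psi_ne d _ R0) (psi_ne (~~ d) _ R0) subrr mulr0.
Qed.


Lemma hsumb_ext u (F G : H -> H -> A) : (forall h1 h2, F h1 h2 = G h1 h2) ->
  hsumb u F = hsumb u G.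
Proof. by move=> e; apply: eq_bigr => T _; rewrite e. Qed.

Lemma hsumb_mulr u (F : H -> H -> A) a :
  hsumb u (fun h1 h2 => F h1 h2 * a) = hsumb u F * a.
Proof. by rewrite /hsumb mulr_suml; apply: eq_bigr => T _; rewrite scalerAl. Qed.

Lemma term0 c (S T : {set 'I_n.-1}) (k : H) :
  ((1 < #|T|) || (1 < #|S :\: T|))%N ->
  sgn K (cross T (S :\: T)) *: (act (hmul (hb K (c (+) odd #|T|, S :\: T)) k) 1
     * act (hb K (c, T)) 1) = 0.
Proof.
case/orP=> h; first by rewrite (@psi2 c T 1 h) mulr0 scaler0.
by rewrite M2 // mul0r scaler0.
Qed.

Lemma key c (S : {set 'I_n.-1}) (k : H) :
  hsumb (c, S) (fun h1 h2 => act (hmul h1 k) 1 * act h2 1) =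
  act (hb K (c, S)) 1 * act k 1.
Proof.
case: (Ucases S) => [->|[[i ->]|hS]].
- rewrite hsumb0; case: c.
  + by rewrite e0 mulr0 mul0r.
  + by rewrite hmul1l (act1 PA) mulr1 mul1r.
- rewrite hsumb1 /= M1; case: c => /=.
  + rewrite e0 mulr0 add0r hmul1l (psi1 true i 1) mulr1.
    by rewrite (cen i).
  + rewrite (act1 PA) mulr1 mulrBr.
    by rewrite -(cen i (act (hmul (hb K (true, set0)) k) 1)) subrK.
rewrite (@psi2 c S 1 hS) mul0r.
case: (boolP (#|S| == 2)) => [/cards2P [i [j [ij ->]]] | S2].
  rewrite /hsumb (bigD1 [set i]) /=; last by rewrite powersetE sub1set !inE eqxx.
  rewrite (bigD1 [set j]) /=; last first.
    by rewrite powersetE sub1set !inE eqxx orbT (inj_eq set1_inj) eq_sym.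
  rewrite big1 ?addr0; last first.
    move=> T /andP[/andP[TS Ti] Tj]; apply: term0.
    case: (Ucases T) => [T0|[[x Tx]|hT]]; last by rewrite hT.
      by rewrite T0 setD0 cards2 ij orbT.
    move: TS Ti Tj; rewrite Tx powersetE sub1set !inE (inj_eq set1_inj) (inj_eq set1_inj).
    by case/orP => /eqP ->; rewrite eqxx.
  have iNj : i \notin [set j] by rewrite inE.
  have jNi : j \notin [set i] by rewrite inE eq_sym.
  have e1 : [set i; j] :\: [set i] = [set j] by rewrite setU1K.
  have e2 : [set i; j] :\: [set j] = [set i] by rewrite setUC setU1K.
  rewrite e1 e2 !cards1 (_ : odd 1 = true) //.
  rewrite !addbT.
  rewrite (M1 (~~ c) j k).
  rewrite (M1 (~~ c) i k).
  rewrite (psi1 c i 1) (psi1 c j 1).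
  rewrite !mulr1.
  rewrite !cross11.
  set X := (act k 1 - _).
  have -> : f j * X * f i = f i * X * f j.
    by rewrite -mulrA -(cen i X) mulrA (cen j (f i)) -mulrA (cen j X) mulrA.
  rewrite -scalerDl; case: (ltngtP i j) => h.
  - by rewrite sgn0 sgn1 addrN scale0r.
  - by rewrite sgn0 sgn1 addNr scale0r.
  - by move/val_inj: h ij => ->; rewrite eqxx.
rewrite /hsumb big1 // => T; rewrite powersetE => TS; apply: term0.
case: (leqP #|T| 1) => hT; last by [].
rewrite (cardsDS TS); apply/orP; right.
have h3 : (2 < #|S|)%N by rewrite ltn_neqAle eq_sym S2 hS.
move: h3 hT; rewrite /=; lia.
Qed.

Lemma sym0 : symmetric_partial_action act.
Proof.
apply: (reduce_basis PA) => -[c S] k a.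
rewrite (actE (hb K (c, S)) (act k a)) (actE k a).
have -> : hsumb (c, S) (fun h1 h2 => act (hmul h1 k) a * act h2 1) =
          hsumb (c, S) (fun h1 h2 => act (hmul h1 k) 1 * act h2 1 * a).
  apply: hsumb_ext => h1 h2.
  by rewrite (actE (hmul h1 k) a) -mulrA -(cen_all h2 a) mulrA.
by rewrite hsumb_mulr key mulrA.
Qed.

End E0.

Unset Implicit Arguments.

Theorem theorem4p5 (K : fieldType) (n : nat) (A : algType K)
    (act : Hn K n -> A -> A) :
  2 \notin [pchar K] -> (2 <= n)%N ->
  partial_action act ->
  (act (Hg K n) 1 = 1 \/
   (act (Hg K n) 1 = 0 /\ forall i : 'I_n.-1, central (act (Hx K i) 1))) ->
  symmetric_partial_action act.
Proof.
move=> _ _ PA [e1 | [e0 cen]].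
- exact: (sym1 PA e1).
- exact: (sym0 PA e0 cen).
Qed.
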